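(* Let $D$ be an integral domain, $S$ a multiplicative subset of $D$, and $M$ a torsion-free unitary $D$-module. Then: (1) If $M$ is an $S$-Noetherian module, then $M$ is a locally $S$-Noetherian module. (2) If $M$ is a locally $S$-Noetherian module which has finite character, then $M$ is an $S$-Noetherian module.
   Context: A submodule $L$ of $M$ is $S$-finite if there exist $s\in S$ and a finitely generated submodule $F$ of $M$ with $Ls\subseteq F\subseteq L$; $M$ is $S$-Noetherian if every submodule is $S$-finite. $M$ is locally $S$-Noetherian if for each maximal ideal $\mathfrak{m}$ of $D$, $M_{\mathfrak{m}}$ is an $S$-Noetherian $D_{\mathfrak{m}}$-module (with $S$ viewed inside $D_{\mathfrak{m}}$). For a submodule $L$, $(L:M)=\{d\in D\mid Md\subseteq L\}$. $M$ has finite character if for each nonzero $a\in M$ with $(aD:M)\neq D$, the ideal $(aD:M)$ is contained in only finitely many maximal ideals of $D$. *)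

(* Defs.v *)
From HB Require Import structures.
From Stdlib Require List.
From mathcomp Require Import all_boot all_order all_algebra.
Set Implicit Arguments. Unset Strict Implicit. Unset Printing Implicit Defensive.
Import GRing.Theory.
Local Open Scope ring_scope.

Section Defs.
Variables (D : idomainType) (M : lmodType D).

Definition multiplicative (S : D -> Prop) : Prop :=
  S 1 /\ forall a b, S a -> S b -> S (a * b).

Definition torsion_free : Prop :=
  forall (d : D) (x : M), d *: x = 0 -> d = 0 \/ x = 0.

Definition is_ideal (I : D -> Prop) : Prop :=
  [/\ I 0, (forall a b, I a -> I b -> I (a + b)) & (forall r a, I a -> I (r * a))].

Definition maximal_ideal (m : D -> Prop) : Prop :=
  [/\ is_ideal m, ~ m 1 &
      forall J, is_ideal J -> (forall x, m x -> J x) -> ~ J 1 ->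
        forall x, J x -> m x].

Definition submodule (L : M -> Prop) : Prop :=
  [/\ L 0, (forall x y, L x -> L y -> L (x + y)) & (forall (a : D) x, L x -> L (a *: x))].

Definition in_span (gs : seq M) (x : M) : Prop :=
  exists cs : seq D, size cs = size gs /\
    x = \sum_(p <- zip cs gs) p.1 *: p.2.

Definition S_finite (S : D -> Prop) (L : M -> Prop) : Prop :=
  exists s, S s /\ exists gs : seq M, (forall g, List.In g gs -> L g) /\
    forall x, L x -> in_span gs (s *: x).

Definition S_Noetherian (S : D -> Prop) : Prop :=
  forall L, submodule L -> S_finite S L.

(** Localization M_m at a maximal (prime) ideal m: elements are fractions
    x/s, encoded as pairs (x, s) with s ∉ m, modulo the usual relation. *)
Definition frac_eq (m : D -> Prop) (p q : M * D) : Prop :=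
  exists u, ~ m u /\ u *: (q.2 *: p.1 - p.2 *: q.1) = 0.

Definition fadd (p q : M * D) : M * D := (q.2 *: p.1 + p.2 *: q.1, p.2 * q.2).
(** action of the element a/u of D_m on x/s *)
Definition fscale (a u : D) (p : M * D) : M * D := (a *: p.1, u * p.2).
Definition fzero : M * D := (0, 1).
Definition fsum (l : seq (M * D)) : M * D := foldr fadd fzero l.

(** D_m-submodules of M_m, represented as sets of fraction representatives
    (closed under the fraction equivalence) *)
Definition loc_submodule (m : D -> Prop) (N : M * D -> Prop) : Prop :=
  [/\ forall p, N p -> ~ m p.2,
      forall p q, N p -> ~ m q.2 -> frac_eq m p q -> N q,
      N fzero,
      forall p q, N p -> N q -> N (fadd p q) &
      forall a u p, ~ m u -> N p -> N (fscale a u p)].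

Definition loc_in_span (m : D -> Prop) (gs : seq (M * D)) (p : M * D) : Prop :=
  exists cs : seq (D * D), size cs = size gs /\
    (forall c, List.In c cs -> ~ m c.2) /\
    frac_eq m p (fsum [seq fscale cg.1.1 cg.1.2 cg.2 | cg <- zip cs gs]).

(** S-finiteness in M_m, where s ∈ S acts as s/1 ∈ D_m *)
Definition loc_S_finite (S : D -> Prop) (m : D -> Prop) (N : M * D -> Prop) : Prop :=
  exists s, S s /\ exists gs : seq (M * D), (forall g, List.In g gs -> N g) /\
    forall p, N p -> loc_in_span m gs (fscale s 1 p).

Definition loc_S_Noetherian (S : D -> Prop) (m : D -> Prop) : Prop :=
  forall N, loc_submodule m N -> loc_S_finite S m N.

Definition locally_S_Noetherian (S : D -> Prop) : Prop :=
  forall m, maximal_ideal m -> loc_S_Noetherian S m.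

Definition colon_cyclic (a : M) (d : D) : Prop :=
  forall y : M, exists e : D, d *: y = e *: a.

Definition finite_character : Prop :=
  forall a : M, a != 0 -> (exists d, ~ colon_cyclic a d) ->
    exists l : seq (D -> Prop), forall m, maximal_ideal m ->
      (forall d, colon_cyclic a d -> m d) ->
      exists I, List.In I l /\ forall d, m d <-> I d.

End Defs.

(* Main.v *)
Require Import Defs.
From mathcomp Require Import all_boot all_order all_algebra.
From Stdlib Require Import Classical.
From mathcomp Require boolp classical_sets.
From mathcomp Require ring.

Module Helpers.
Import ring.
Set Implicit Arguments. Unset Strict Implicit. Unset Printing Implicit Defensive.
Import GRing.Theory.
Local Open Scope ring_scope.


Lemma in_span_nil (D : idomainType) (M : lmodType D) (x : M) :
  in_span [::] x <-> x = 0.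
Proof.
split.
  by case=> [[|c cs]] [_ ->]; rewrite /= big_nil.
by move=> ->; exists [::]; rewrite big_nil.
Qed.

Lemma in_span_cons (D : idomainType) (M : lmodType D) (g : M) gs x :
  in_span (g :: gs) x <-> exists c y, in_span gs y /\ x = c *: g + y.
Proof.
split.
  case=> [[|c cs]] [//= [Hs] ->].
  by exists c, (\sum_(p <- zip cs gs) p.1 *: p.2); split; [exists cs|rewrite big_cons].
case=> c [y [[cs [Hs ->]] ->]]; exists (c :: cs); split; first by rewrite /= Hs.
by rewrite /= big_cons.
Qed.

Lemma span0 (D : idomainType) (M : lmodType D) (gs : seq M) : in_span gs 0.
Proof.
elim: gs => [|g gs IH]; first by apply/in_span_nil.
by apply/in_span_cons; exists 0, 0; rewrite scale0r addr0.
Qed.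

Lemma spanD (D : idomainType) (M : lmodType D) (gs : seq M) x y :
  in_span gs x -> in_span gs y -> in_span gs (x + y).
Proof.
elim: gs x y => [|g gs IH] x y.
  by move=> /in_span_nil -> /in_span_nil ->; apply/in_span_nil; rewrite addr0.
move=> /in_span_cons [c [x' [Hx ->]]] /in_span_cons [c' [y' [Hy ->]]].
apply/in_span_cons; exists (c + c'), (x' + y'); split; first exact: IH.
by rewrite scalerDl; rewrite -!addrA; congr (_ + _); rewrite addrC -addrA; congr (_ + _); rewrite addrC.
Qed.

Lemma spanZ (D : idomainType) (M : lmodType D) (gs : seq M) (a : D) x :
  in_span gs x -> in_span gs (a *: x).
Proof.
elim: gs x => [|g gs IH] x.
  by move=> /in_span_nil ->; apply/in_span_nil; rewrite scaler0.
move=> /in_span_cons [c [x' [Hx ->]]].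
apply/in_span_cons; exists (a * c), (a *: x'); split; first exact: IH.
by rewrite scalerDr scalerA.
Qed.

Lemma span_mem (D : idomainType) (M : lmodType D) (gs : seq M) g :
  List.In g gs -> in_span gs g.
Proof.
elim: gs => [|h gs IH] //= [->|Hg]; apply/in_span_cons.
  by exists 1, 0; rewrite scale1r addr0; split; first exact: span0.
by exists 0, g; rewrite scale0r add0r; split; first exact: IH.
Qed.

Lemma span_sub (D : idomainType) (M : lmodType D) (gs hs : seq M) x :
  (forall g, List.In g gs -> in_span hs g) -> in_span gs x -> in_span hs x.
Proof.
elim: gs x => [|g gs IH] x Hsub.
  by move=> /in_span_nil ->; exact: span0.
move=> /in_span_cons [c [y [Hy ->]]].
apply: spanD; first by apply: spanZ; apply: Hsub; left.
by apply: IH => // h Hh; apply: Hsub; right.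
Qed.



Lemma max_prime (D : idomainType) (m : D -> Prop) a b :
  maximal_ideal m -> ~ m a -> ~ m b -> ~ m (a * b).
Proof.
move=> [[m0 mD mM] m1 mmax] na nb mab.
pose J z := exists x r, m x /\ z = x + r * a.
have HJ : is_ideal J.
  rewrite /J; split.
  - by exists 0, 0; rewrite mul0r addr0.
  - move=> _ _ [x [r [mx ->]]] [y [r' [my ->]]]; exists (x + y), (r + r'); split; first exact: mD.
    by rewrite mulrDl -!addrA; congr (_ + _); rewrite addrC -addrA; congr (_ + _); rewrite addrC.
  - move=> r _ [x [r' [mx ->]]]; exists (r * x), (r * r'); split; first exact: mM.
    by rewrite mulrDr mulrA.
have mJ : forall x, m x -> J x by move=> x mx; rewrite /J; exists x, 0; rewrite mul0r addr0.
case: (classic (J 1)) => [[x [r [mx E]]]|nJ1].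
  apply: nb; have -> : b = b * x + r * (a * b).
    by rewrite -[b in LHS]mulr1 E; ring.
  by apply: mD; apply: mM.
apply: na; apply: (mmax J HJ mJ nJ1); rewrite /J; exists 0, 1; by rewrite mul1r add0r.
Qed.

Lemma fsum1 (D : idomainType) (M : lmodType D) (cs : seq D) (gs : seq M) (u : D) :
  size cs = size gs ->
  (fsum [seq fscale cg.1.1 cg.1.2 cg.2 | cg <- zip [seq (c, u) | c <- cs] [seq (g, 1) | g <- gs]]).2 = u ^+ size cs /\
  u *: (fsum [seq fscale cg.1.1 cg.1.2 cg.2 | cg <- zip [seq (c, u) | c <- cs] [seq (g, 1) | g <- gs]]).1
   = u ^+ size cs *: \sum_(p <- zip cs gs) p.1 *: p.2.
Proof.
elim: cs gs => [|c cs IH] [|g gs] //.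
  by move=> _; rewrite /= big_nil !scaler0 expr0.
move=> [Hs]; have [IH1 IH2] := IH gs Hs.
set F := fsum _ in IH1 IH2.
have -> : fsum [seq fscale cg.1.1 cg.1.2 cg.2 | cg <- zip [seq (c0, u) | c0 <- c :: cs] [seq (g0, 1) | g0 <- g :: gs]]
  = fadd (c *: g, u * 1) F by [].
rewrite /fadd /= IH1 mulr1 exprS; split => //.
by rewrite big_cons !scalerDr IH2 !scalerA.
Qed.



Lemma part1 (D : idomainType) (M : lmodType D) (S : D -> Prop) :
  S_Noetherian M S -> locally_S_Noetherian M S.
Proof.
move=> SN m mmax N [N2 Neq N0 NA NZ].
have m1 : ~ m 1 by case: mmax.
pose L (x : M) := N (x, 1).
have subL : submodule L.
  split; rewrite /L.
  - exact: N0.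
  - move=> x y Hx Hy; have := NA _ _ Hx Hy.
    by rewrite /fadd /= !scale1r mulr1.
  - move=> a x Hx; have := NZ a 1 _ m1 Hx.
    by rewrite /fscale /= mulr1.
have [s [Ss [gs [gsL Hgs]]]] := SN L subL.
exists s; split => //.
exists [seq (g, 1) | g <- gs]; split.
  move=> g /List.in_map_iff [g' [<- Hg']]; exact: gsL.
move=> [x u] Np.
have mu : ~ m u := N2 _ Np.
have Lx : L x.
  have := NZ u 1 _ m1 Np; rewrite /fscale /= => Np'.
  apply: (Neq _ _ Np') => //=.
  exists 1; split => //=.
  by rewrite !scale1r mul1r subrr.
have [cs [Hcs Hsx]] := Hgs x Lx.
exists [seq (c, u) | c <- cs]; split; first by rewrite size_map Hcs size_map.
split.
  by move=> c /List.in_map_iff [c' [<- _]].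
have [F2 F1] := fsum1 u Hcs.
exists 1; split => //.
have -> : fscale s 1 (x, u) = (s *: x, u) by rewrite /fscale /= mul1r.
by rewrite /= F2 scale1r F1 -Hsx subrr.
Qed.



Lemma clear_list (D : idomainType) (M : lmodType D) (m : D -> Prop) (L : M -> Prop)
  (G : seq (M * D)) :
  maximal_ideal m ->
  (forall g, List.In g G -> ~ m g.2 /\ exists t, ~ m t /\ L (t *: g.1)) ->
  exists ys, (forall y, List.In y ys -> L y) /\
    forall cs : seq (D * D), size cs = size G -> (forall c, List.In c cs -> ~ m c.2) ->
      ~ m (fsum [seq fscale cg.1.1 cg.1.2 cg.2 | cg <- zip cs G]).2 /\
      exists T, ~ m T /\ in_span ys (T *: (fsum [seq fscale cg.1.1 cg.1.2 cg.2 | cg <- zip cs G]).1).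
Proof.
move=> mmax; have m1 : ~ m 1 by case: mmax.
elim: G => [|g G IH] HG.
  exists [::]; split => // [[|c cs]] //= _ _; split => //.
  by exists 1; split => //; rewrite scaler0; exact: span0.
have [mg2 [t [mt Lt]]] := HG g (or_introl erefl).
have [ys [ysL Hys]] := IH (fun g' H => HG g' (or_intror H)).
exists (t *: g.1 :: ys); split.
  by move=> y /= [<-|H] //; exact: ysL.
move=> [|[c u] cs] //= [Hs] Hc.
have mu : ~ m u by exact: (Hc (c, u) (or_introl erefl)).
have [F2 [T [mT HT]]] := Hys cs Hs (fun c' H => Hc c' (or_intror H)).
set F := fsum _ in F2 HT *.
rewrite /fadd /=; split.
  by apply: max_prime => //; apply: max_prime.
exists (t * T); split; first exact: max_prime.
have -> : (t * T) *: (F.2 *: (c *: g.1) + (u * g.2) *: F.1) =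
   (T * F.2 * c) *: (t *: g.1) + (t * u * g.2) *: (T *: F.1).
  by rewrite scalerDr !scalerA; congr (_ *: _ + _ *: _); ring.
apply: spanD; apply: spanZ; first by apply: span_mem; left.
apply: (span_sub _ HT) => y Hy; apply: span_mem; by right.
Qed.

Lemma local_data (D : idomainType) (M : lmodType D) (S : D -> Prop) (m : D -> Prop) (L : M -> Prop) :
  maximal_ideal m -> loc_S_Noetherian M S m -> submodule L ->
  exists s, S s /\ exists ys, (forall y, List.In y ys -> L y) /\
    forall x, L x -> exists t, ~ m t /\ in_span ys (t *: (s *: x)).
Proof.
move=> mmax LSN [L0 LD LZ]; have m1 : ~ m 1 by case: mmax.
pose N (p : M * D) := ~ m p.2 /\ exists t, ~ m t /\ L (t *: p.1).
have NN : loc_submodule m N.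
  split.
  - by move=> p [].
  - move=> [p1 p2] [q1 q2] [mp2 [t [mt Lt]]] mq2 [u [mu E]] /=; split => //.
    exists (t * u * p2); split; first by apply: max_prime => //; apply: max_prime.
    have E' : u *: (p2 *: q1) = u *: (q2 *: p1).
      by apply/eqP; rewrite eq_sym -subr_eq0 -scalerBr; apply/eqP.
    have -> : (t * u * p2) *: q1 = (u * q2) *: (t *: p1).
      by rewrite -!scalerA E' !scalerA; congr (_ *: _); ring.
    exact: LZ.
  - by split => //; exists 1; split => //; rewrite scaler0.
  - move=> [p1 p2] [q1 q2] [mp2 [t [mt Lt]]] [mq2 [t' [mt' Lt']]]; rewrite /fadd /=.
    split; first exact: max_prime.
    exists (t * t'); split; first exact: max_prime.
    have -> : (t * t') *: (q2 *: p1 + p2 *: q1) = (t' * q2) *: (t *: p1) + (t * p2) *: (t' *: q1).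
      by rewrite scalerDr !scalerA; congr (_ *: _ + _ *: _); ring.
    by apply: LD; apply: LZ.
  - move=> a u [p1 p2] mu [mp2 [t [mt Lt]]]; rewrite /fscale /=; split; first exact: max_prime.
    exists t; split => //; rewrite scalerA mulrC -scalerA; exact: LZ.
have [s [Ss [gs [gsN Hgs]]]] := LSN N NN.
exists s; split => //.
have [ys [ysL Hys]] := @clear_list _ _ m L gs mmax gsN.
exists ys; split => // x Lx.
have Nx : N (x, 1) by split => //; exists 1; split => //; rewrite scale1r.
have [cs [Hcs [Hc [w [mw E]]]]] := Hgs _ Nx.
have [F2 [T [mT HT]]] := Hys cs Hcs Hc.
move: E F2 HT; set F := fsum _ => E F2 HT.
exists (T * w * F.2); split; first by apply: max_prime => //; apply: max_prime.
move: E; rewrite /fscale /= mulr1 scale1r => E.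
have E' : (w * F.2) *: (s *: x) = w *: F.1.
  by apply/eqP; rewrite -subr_eq0 -scalerA -scalerBr; apply/eqP.
by rewrite -mulrA -scalerA E' scalerA mulrC -scalerA; apply: spanZ.
Qed.



Lemma krull (D : idomainType) (T : D -> Prop) :
  is_ideal T -> ~ T 1 -> exists m, maximal_ideal m /\ forall x, T x -> m x.
Proof.
move=> IT nT1.
pose P (J : D -> Prop) := is_ideal J /\ ~ J 1 /\ (forall x, T x -> J x).
pose X := {J : D -> Prop | P J}.
pose R (a b : X) := boolp.asbool (forall x, proj1_sig a x -> proj1_sig b x).
have t0 : X by exists T; split => //.
have [|||t tmax] := @classical_sets.ZL_preorder X t0 R.
- by move=> a; apply/boolp.asboolP.
- move=> a b c /boolp.asboolP Hab /boolp.asboolP Hbc; apply/boolp.asboolP => x Hx.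
  by apply: Hbc; apply: Hab.
- move=> A Atot.
  case: (classic (exists a, A a)) => [[a0 Aa0]|nA]; last first.
    by exists t0 => s As; exfalso; apply: nA; exists s.
  pose U x := exists a, A a /\ proj1_sig a x.
  have PU : P U.
    split; last split.
    + split.
      * exists a0; split => //; case: (proj2_sig a0) => [[]] //.
      * move=> x y [a [Aa Ha]] [b [Ab Hb]].
        case: (Atot a b Aa Ab) => /boolp.asboolP Hr.
          exists b; split => //; case: (proj2_sig b) => [[_ HD _] _]; apply: HD => //; exact: Hr.
        exists a; split => //; case: (proj2_sig a) => [[_ HD _] _]; apply: HD => //; exact: Hr.
      * move=> r x [a [Aa Ha]]; exists a; split => //.
        by case: (proj2_sig a) => [[_ _ HM] _]; apply: HM.
    + move=> [a [Aa Ha]]; by case: (proj2_sig a) => [_ [H _]]; apply: H.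
    + move=> x Tx; exists a0; split => //; by case: (proj2_sig a0) => [_ [_ H]]; apply: H.
  exists (exist _ U PU) => s As; apply/boolp.asboolP => x Hx /=.
  by exists s.
exists (proj1_sig t); case: (proj2_sig t) => [It [nt1 Tt]]; split => //.
split => // J IJ tJ nJ1.
have PJ : P J by split => //; split => // x Tx; apply: tJ; apply: Tt.
have := tmax (exist _ J PJ).
have H : R t (exist _ J PJ) by apply/boolp.asboolP.
by move=> /(_ H) /boolp.asboolP.
Qed.



Lemma combine (D : idomainType) (M : lmodType D) (S : D -> Prop) (L : M -> Prop)
   (l : seq (D -> Prop)) :
  Defs.multiplicative S -> locally_S_Noetherian M S -> submodule L ->
  exists s, S s /\ exists ys, (forall y, List.In y ys -> L y) /\
    forall I, List.In I l -> maximal_ideal I ->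
    forall x, L x -> exists t, ~ I t /\ in_span ys (t *: (s *: x)).
Proof.
move=> [S1 SM] LSN subL.
elim: l => [|I l [s [Ss [ys [ysL Hys]]]]].
  by exists 1; split => //; exists [::]; split.
case: (classic (maximal_ideal I)) => [mI|nmI]; last first.
  exists s; split => //; exists ys; split => // I' [<-|HI] // mI' x Lx.
  exact: Hys.
have [s' [Ss' [ys' [ys'L Hys']]]] := local_data mI (LSN I mI) subL.
exists (s' * s); split; first exact: SM.
exists (ys' ++ ys); split.
  by move=> y /List.in_app_iff [H|H]; [exact: ys'L|exact: ysL].
move=> I' HI' mI' x Lx.
have Hsub1 : forall g, List.In g ys' -> in_span (ys' ++ ys) g.
  by move=> g Hg; apply: span_mem; apply/List.in_app_iff; left.
have Hsub2 : forall g, List.In g ys -> in_span (ys' ++ ys) g.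
  by move=> g Hg; apply: span_mem; apply/List.in_app_iff; right.
case: HI' => [<-|HI'].
  have [t [nt Ht]] := Hys' x Lx; exists t; split => //.
  rewrite mulrC -scalerA scalerA mulrC -scalerA; apply: spanZ.
  exact: span_sub Ht.
have [t [nt Ht]] := Hys I' HI' mI' x Lx; exists t; split => //.
rewrite -scalerA scalerA mulrC -scalerA; apply: spanZ.
exact: span_sub Ht.
Qed.

Lemma part2 (D : idomainType) (M : lmodType D) (S : D -> Prop) :
  Defs.multiplicative S ->
  locally_S_Noetherian M S -> finite_character M -> S_Noetherian M S.
Proof.
move=> HS LSN FC L subL.
have S1 : S 1 by case: HS.
case: (classic (exists b, L b /\ b != 0)) => [[b [Lb nb]]|nb]; last first.
  exists 1; split => //; exists [::]; split => // x Lx.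
  have -> : x = 0.
    by apply/eqP; apply: contraT => H; exfalso; apply: nb; exists x.
  by rewrite scaler0; exact: span0.
case: (classic (exists d, ~ colon_cyclic b d)) => [Hd|Hd]; last first.
  exists 1; split => //; exists [:: b]; split; first by move=> g [<-|].
  move=> x Lx.
  have Hc : colon_cyclic b 1 by apply: NNPP => H; apply: Hd; exists 1.
  have [e He] := Hc x.
  by rewrite He; apply: spanZ; apply: span_mem; left.
have [l Hl] := FC b nb Hd.
have [s [Ss [ys [ysL Hys]]]] := combine l HS LSN subL.
exists s; split => //; exists (b :: ys); split.
  by move=> g [<-|H] //; exact: ysL.
move=> x Lx.
pose T t := in_span (b :: ys) (t *: (s *: x)).
have IT : is_ideal T.
  split; rewrite /T.
  - by rewrite scale0r; exact: span0.
  - by move=> a c Ha Hc; rewrite scalerDl; exact: spanD.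
  - by move=> r a Ha; rewrite -scalerA; exact: spanZ.
case: (classic (T 1)) => [|nT1]; first by rewrite /T scale1r.
have [m [mmax Tm]] := krull IT nT1.
have Hsub : forall g, List.In g ys -> in_span (b :: ys) g.
  by move=> g Hg; apply: span_mem; right.
case: (classic (forall d, colon_cyclic b d -> m d)) => [Cm|Cm].
  have [I [HI mI]] := Hl m mmax Cm.
  have EI : m = I by apply: boolp.funext => d; apply: boolp.propext.
  subst I.
  have [t [nt Ht]] := Hys m HI mmax x Lx.
  exfalso; apply: nt; apply: Tm; rewrite /T.
  exact: span_sub Ht.
have [d [cd nd]] : exists d, colon_cyclic b d /\ ~ m d.
  apply: NNPP => H; apply: Cm => d cd; apply: NNPP => nd; apply: H; exists d; by split.
exfalso; apply: nd; apply: Tm; rewrite /T.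
have [e He] := cd (s *: x).
by rewrite He; apply: spanZ; apply: span_mem; left.
Qed.

End Helpers.

Theorem proposition2p4 (D : idomainType) (M : lmodType D) (S : D -> Prop) :
  multiplicative S -> torsion_free M ->
  (S_Noetherian M S -> locally_S_Noetherian M S) /\
  (locally_S_Noetherian M S -> finite_character M -> S_Noetherian M S).
Proof.
move=> HS _; split; first exact: Helpers.part1.
exact: Helpers.part2.
Qed.
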